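(* Let $P_n$ be a random school choice problem of size $n$, let $\epsilon\in(0,1)$ and $L>0$ be constants, and let $I_0\subseteq I$ and $S_1\subseteq S$ be fixed (deterministic) subsets with $|I_0|\ge \epsilon n$ and $|S_1|\ge\epsilon n$. Then the probability of the event that the students in $I_0$ together make at least $Ln$ applications during DA and no student in $I_0$ ever applies to any school in $S_1$ during DA is at most $(1-\epsilon)^{Ln}$.
   Context: A random school choice problem $P_n$ of size $n$ has a set $I$ of $n$ students and a set $S$ of $n$ schools, each with quota 1; each student's strict preference over $S$ and each school's strict priority over $I$ are uniformly random linear orders, all mutually independent. The student-proposing deferred acceptance (DA) algorithm: in each round every student not tentatively held applies to her most preferred school that has not yet rejected her; each school tentatively holds its highest-priority applicant and rejects the others; stop when a round has no new rejection. Student $i$ applies to school $s$ during DA if at some round she proposes to $s$; the number of applications a student makes is the number of schools she applies to. *)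

(* Defs.v *)
From mathcomp Require Import all_boot all_fingroup.
From Stdlib Require Import Reals.

Set Implicit Arguments.
Unset Strict Implicit.
Unset Printing Implicit Defensive.

(* A school choice problem of size n: students 'I_n, schools 'I_n, quota 1.
   Component 1: for each student i, a permutation (P.1 i) of the schools;
     (P.1 i) k is the school student i ranks k-th (k = 0 most preferred).
   Component 2: for each school s, a permutation (P.2 s) of the students;
     (P.2 s) k is the student with the k-th highest priority at s.
   Uniform random strict linear orders, all independent, correspond exactly to
   the uniform distribution on this finite type. *)
Definition problem (n : nat) : finType :=
  ({ffun 'I_n -> {perm 'I_n}} * {ffun 'I_n -> {perm 'I_n}})%type.

Definition prio_rank n (P : problem n) (s j : 'I_n) : nat := ((P.2 s)^-1)%g j.

(* DA state: r i = number of rejections student i has received so far.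
   Student i currently applies to / is held at her (r i)-th choice if r i < n. *)
Definition target n (P : problem n) (r : {ffun 'I_n -> nat}) (i : 'I_n)
  : option 'I_n := omap (P.1 i) (insub (r i)).

(* In a round, school s holds the highest-priority student among those whose
   current target is s (new applicants and the tentatively held one) and
   rejects the others. *)
Definition rejected n (P : problem n) (r : {ffun 'I_n -> nat}) (i : 'I_n) : bool :=
  if target P r i is Some s then
    [exists j, [&& j != i, target P r j == Some s & prio_rank P s j < prio_rank P s i]]
  else false.

Definition da_step n (P : problem n) (r : {ffun 'I_n -> nat}) : {ffun 'I_n -> nat} :=
  [ffun i => r i + rejected P r i].

(* Each non-final round increases \sum_i r i (bounded by n*n), so after n*n
   rounds DA has stopped (a round with no new rejection is a fixed point). *)
Definition da_final n (P : problem n) : {ffun 'I_n -> nat} :=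
  iter (n * n) (da_step P) [ffun => 0%N].

Definition applies n (P : problem n) (i s : 'I_n) : bool :=
  [exists k : 'I_n, (k <= da_final P i) && (P.1 i k == s)].

Definition num_apps n (P : problem n) (i : 'I_n) : nat :=
  #|[set s | applies P i s]|.

Definition Rleb (x y : R) : bool := if Rle_dec x y then true else false.

Definition prob n (E : pred (problem n)) : R :=
  (INR #|E| / INR #|{: problem n}|)%R.

(* Main.v *)
Require Import Defs.
From mathcomp Require Import all_boot all_fingroup.
From Stdlib Require Import Reals Lra.
Set Warnings "-notation-overridden".
Set Implicit Arguments.
Unset Strict Implicit.
Local Open Scope nat_scope.

Lemma iter_le n (P : problem n) t N i : t <= N ->
  iter t (da_step P) [ffun => 0%N] i <= iter N (da_step P) [ffun => 0%N] i.
Proof.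
elim: N => [|N IH]; first by rewrite leqn0 => /eqP ->.
rewrite leq_eqVlt => /orP [/eqP -> //|/IH H].
apply: (leq_trans H); by rewrite /= ffunE leq_addr.
Qed.

Lemma da_step_eq n (P P' : problem n) (r : {ffun 'I_n -> nat}) : P'.2 = P.2 ->
  (forall i (k : 'I_n), k <= r i -> P'.1 i k = P.1 i k) ->
  da_step P' r = da_step P r.
Proof.
move=> H2 H1.
have ht : forall j, target P' r j = target P r j.
  move=> j; rewrite /target; case: insubP => [k _ Ek|_] //=.
  by rewrite H1 // Ek.
apply/ffunP => i; rewrite !ffunE /rejected ht.
case: (target P r i) => // s; congr (_ + _); congr nat_of_bool.
apply: eq_existsb => j; by rewrite ht /prio_rank H2.
Qed.
Lemma final_eq n (P P' : problem n) : P'.2 = P.2 ->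
  (forall i (k : 'I_n), k <= da_final P i -> P'.1 i k = P.1 i k) ->
  da_final P' = da_final P.
Proof.
move=> H2 H1.
suff H : forall t, t <= n * n -> iter t (da_step P') [ffun => 0%N] = iter t (da_step P) [ffun => 0%N].
  exact: (H (n * n) (leqnn _)).
elim=> [|t IH] Ht; first by [].
rewrite [LHS]/= [RHS]/=.
rewrite IH; last exact: ltnW.
apply: da_step_eq => // i k Hk.
apply: H1; apply: (leq_trans Hk). exact: iter_le (ltnW Ht).
Qed.

Definition agree n (P P' : problem n) :=
  P'.2 = P.2 /\ forall i (k : 'I_n), k <= da_final P i -> P'.1 i k = P.1 i k.

Lemma applies_eq n (P P' : problem n) : agree P P' -> applies P' =2 applies P.
Proof.
move=> [H2 H1] i s; rewrite /applies (final_eq H2 H1).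
apply: eq_existsb => k; case Hk: (k <= _) => //=; by rewrite H1.
Qed.

Lemma num_apps_eq n (P P' : problem n) : agree P P' -> num_apps P' =1 num_apps P.
Proof.
move=> H i; rewrite /num_apps; apply: eq_card => s; by rewrite !inE (applies_eq H).
Qed.
Lemma card_lt n m : m <= n -> #|[set y : 'I_n | y < m]| = m.
Proof.
move=> Hm.
have -> : [set y : 'I_n | y < m] = [set widen_ord Hm x | x : 'I_m].
  apply/setP => y; rewrite inE; apply/idP/imsetP => [Hy|[x _ ->]].
    by exists (Ordinal Hy) => //; apply: val_inj.
  exact: (ltn_ord x).
by rewrite card_imset ?card_ord //; move=> x y /(congr1 val) /= E; exact: val_inj.
Qed.

Lemma le_num_apps n (P : problem n) i (x : 'I_n) :
  x <= da_final P i -> x < num_apps P i.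
Proof.
move=> Hx; have Hx1 : x.+1 <= n := ltn_ord x.
rewrite -{1}(card_lt Hx1) -(card_imset _ (@perm_inj _ (P.1 i))).
apply: subset_leq_card; apply/subsetP => s /imsetP [y]; rewrite inE => Hy ->.
rewrite inE /applies; apply/existsP; exists y; rewrite eqxx andbT.
by apply: leq_trans Hx; rewrite -ltnS.
Qed.

Lemma num_apps_small n (P : problem n) i t :
  da_final P i < t -> num_apps P i <= t.
Proof.
move=> Ht; case: (leqP t n) => Htn; last first.
  apply: leq_trans (max_card _) _; rewrite card_ord; exact: ltnW.
rewrite -[X in _ <= X](card_lt Htn) -(card_imset _ (@perm_inj _ (P.1 i))).
apply: subset_leq_card; apply/subsetP => s; rewrite inE => /existsP [y /andP [Hy /eqP <-]].
apply/imsetP; exists y => //; rewrite inE; exact: leq_ltn_trans Hy Ht.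
Qed.

Definition sw n (i t k : 'I_n) (P : problem n) : problem n :=
  ([ffun j => if j == i then (tperm t k * P.1 j)%g else P.1 j], P.2).

Lemma swK n (i t k : 'I_n) (P : problem n) : sw i t k (sw i t k P) = P.
Proof.
case: P => P1 P2; rewrite /sw /=; congr pair; apply/ffunP => j; rewrite !ffunE.
case: eqP => // ->; apply/permP => x; by rewrite !permM tpermK.
Qed.

Lemma sw_agree n (i t k : 'I_n) (P : problem n) :
  num_apps P i <= t -> t <= k -> agree P (sw i t k P).
Proof.
move=> Ha Htk; split => //= j x Hx; rewrite ffunE; case: eqP => // Ej.
have Hxt : x < t by apply: leq_trans (le_num_apps _) Ha; rewrite -Ej.
rewrite permM tpermD //; apply/eqP => E; move: Hxt.
  by rewrite E ltnn.
by rewrite -E ltnNge Htk.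
Qed.

Lemma swap_sum (T I : finType) (G H : pred T) (Kp : pred I) (sw : I -> T -> T) (F : T -> nat) :
  (forall k P, Kp k -> G P -> G (sw k P)) -> (forall k P, Kp k -> sw k (sw k P) = P) ->
  (forall k P, Kp k -> G P -> F (sw k P) = F P) ->
  #|[set k | Kp k]| * \sum_(P | G P && H P) F P =
  \sum_(P | G P) F P * #|[set k | Kp k && H (sw k P)]|.
Proof.
move=> HG Hinv HF.
rewrite -sum1dep_card big_distrl /=.
transitivity (\sum_(k | Kp k) \sum_(P | G P) F P * H (sw k P)).
  apply: eq_bigr => k Hk; rewrite mul1n (reindex_inj (can_inj (fun P => Hinv k P Hk))).
  rewrite [RHS]big_mkcond [LHS]big_mkcond; apply: eq_bigr => P _.
  case GP: (G P).
    rewrite (HG k P Hk GP) /= HF //; by case: (H _); rewrite ?muln1 ?muln0.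
  have -> // : G (sw k P) = false.
  apply/negbTE/negP => /(HG k _ Hk); by rewrite Hinv // GP.
rewrite exchange_big; apply: eq_bigr => P _; rewrite -big_distrr /=; congr (_ * _).
rewrite -sum1dep_card big_mkcondr; apply: eq_bigr => k _; by case: (H _).
Qed.
From mathcomp Require Import zify.

Definition Gs n (S1 : {set 'I_n}) (lim : {ffun 'I_n -> nat}) (P : problem n) : bool :=
  [forall j, forall k : 'I_n, (k < lim j) ==> (P.1 j k \notin S1)].
Definition Xs n (I0 : {set 'I_n}) (lim : {ffun 'I_n -> nat}) (P : problem n) :=
  \sum_(j in I0) minn (num_apps P j) (lim j).
Definition Sg n (I0 : {set 'I_n}) (lim : {ffun 'I_n -> nat}) := \sum_(j in I0) lim j.
Definition Ws n (I0 S1 : {set 'I_n}) (lim : {ffun 'I_n -> nat}) (P : problem n) :=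
  expn (n - #|S1|) (Xs I0 lim P) * expn n (Sg I0 lim - Xs I0 lim P).
Definition Num n (I0 S1 : {set 'I_n}) (E : pred (problem n)) lim :=
  \sum_(P | Gs S1 lim P) E P * Ws I0 S1 lim P.
Definition upd n (lim : {ffun 'I_n -> nat}) (i : 'I_n) (v : nat) : {ffun 'I_n -> nat} :=
  [ffun j => if j == i then v else lim j].

Lemma GsP n (S1 : {set 'I_n}) (lim : {ffun 'I_n -> nat}) (P : problem n) :
  reflect (forall j (k : 'I_n), k < lim j -> P.1 j k \notin S1) (Gs S1 lim P).
Proof.
apply: (iffP forallP) => H j.
  move=> k Hk; have /forallP/(_ k)/implyP := H j; exact.
apply/forallP => k; apply/implyP; exact: H.
Qed.

Lemma Gs_upd n (S1 : {set 'I_n}) (lim : {ffun 'I_n -> nat}) (i t : 'I_n) (P : problem n) : lim i = t ->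
  Gs S1 (upd lim i t.+1) P = Gs S1 lim P && (P.1 i t \notin S1).
Proof.
move=> Ht; apply/idP/andP.
  move/GsP => H; split; last by apply: H; rewrite ffunE eqxx.
  apply/GsP => j k Hk; apply: H; rewrite ffunE; case: eqP => [E|//].
  by rewrite -Ht -E ltnW.
move=> [/GsP H1 H2]; apply/GsP => j k; rewrite ffunE; case: eqP => [->|_]; last exact: H1.
rewrite ltnS leq_eqVlt => /orP [/eqP Ekt|Hlt].
  by have -> : k = t by apply: val_inj.
by apply: H1; rewrite Ht.
Qed.

Lemma sw_Gs n (S1 : {set 'I_n}) (lim : {ffun 'I_n -> nat}) (i t k : 'I_n) (P : problem n) : lim i = t -> t <= k ->
  Gs S1 lim P -> Gs S1 lim (sw i t k P).
Proof.
move=> Ht Htk /GsP H; apply/GsP => j x Hx; rewrite ffunE; case: eqP => [E|_]; last exact: H.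
rewrite E in Hx *; rewrite permM tpermD; first exact: H.
  by apply/eqP => E'; move: Hx; rewrite Ht E' ltnn.
by apply/eqP => E'; move: Hx; rewrite Ht -E' ltnNge Htk.
Qed.

Lemma sw_at n (i t k : 'I_n) (P : problem n) : (sw i t k P).1 i t = P.1 i k.
Proof. by rewrite ffunE eqxx permM tpermL. Qed.

Lemma count_good n (S1 : {set 'I_n}) (s : {perm 'I_n}) t : t <= n - #|S1| ->
  (forall k : 'I_n, k < t -> s k \notin S1) ->
  #|[set k : 'I_n | (t <= k) && (s k \notin S1)]| = n - #|S1| - t.
Proof.
move=> Ht H.
set Y := s @^-1: (~: S1).
have cY : #|Y| = n - #|S1|.
  rewrite card_preimset; last exact: perm_inj.
  by rewrite cardsCs setCK card_ord.
have := cardsID [set k : 'I_n | k < t] Y.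
have -> : Y :&: [set k : 'I_n | k < t] = [set k : 'I_n | k < t].
  apply/setIidPr/subsetP => k; rewrite !inE => Hk; exact: H.
have -> : Y :\: [set k : 'I_n | k < t] = [set k : 'I_n | (t <= k) && (s k \notin S1)].
  apply/setP => k; rewrite !inE -leqNgt andbC //.
rewrite card_lt; last exact: leq_trans Ht (leq_subr _ _).
rewrite cY; lia.
Qed.

Lemma arith_step (n s t N N' SB SC SC' g g' : nat) :
  t < n - s -> N = SB + SC -> N' = (n - s) * SB + n * SC' ->
  (n - t) * SC' = SC * (n - s - t) -> (n - t) * g' = (n - s - t) * g ->
  N * g' * n <= N' * g.
Proof.
move=> Ht -> -> H1 H2.
have Hnt : 0 < n - t by lia.
rewrite -(leq_pmul2l Hnt).
have -> : (n - t) * ((SB + SC) * g' * n) = (SB + SC) * n * ((n - t) * g') by nia.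
have -> : (n - t) * (((n - s) * SB + n * SC') * g) =
          ((n - s) * (n - t) * SB + n * ((n - t) * SC')) * g by nia.
rewrite H1 H2.
have Hk : SB * n * (n - s - t) <= SB * ((n - s) * (n - t)).
  rewrite -mulnA leq_mul2l; apply/orP; right; nia.
nia.
Qed.

Lemma Xs_eq n (I0 : {set 'I_n}) lim (P Q : problem n) :
  num_apps Q =1 num_apps P -> Xs I0 lim Q = Xs I0 lim P.
Proof. by move=> H; apply: eq_bigr => j _; rewrite H. Qed.

Lemma Ws_eq n (I0 S1 : {set 'I_n}) lim (P Q : problem n) :
  num_apps Q =1 num_apps P -> Ws I0 S1 lim Q = Ws I0 S1 lim P.
Proof. by move=> H; rewrite /Ws (Xs_eq _ _ H). Qed.

Lemma Xs_le n (I0 : {set 'I_n}) lim (P : problem n) : Xs I0 lim P <= Sg I0 lim.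
Proof. by apply: leq_sum => j _; exact: geq_minr. Qed.

Lemma Ws_upd n (I0 S1 : {set 'I_n}) lim (i : 'I_n) (P : problem n) : i \in I0 ->
  Ws I0 S1 (upd lim i (lim i).+1) P =
  (if lim i < num_apps P i then n - #|S1| else n) * Ws I0 S1 lim P.
Proof.
move=> Hi.
have HS : Sg I0 (upd lim i (lim i).+1) = (Sg I0 lim).+1.
  rewrite /Sg (bigD1 i Hi) [in RHS](bigD1 i Hi) /= ffunE eqxx addSn; congr (_ + _).+1.
  by apply: eq_bigr => j /andP [_ /negbTE Hj]; rewrite ffunE Hj.
have HX : Xs I0 (upd lim i (lim i).+1) P = Xs I0 lim P + (lim i < num_apps P i).
  rewrite /Xs (bigD1 i Hi) [in RHS](bigD1 i Hi) ffunE eqxx.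
  rewrite (eq_bigr (fun j => minn (num_apps P j) (lim j))); last first.
    by move=> j /andP [_ /negbTE Hj]; rewrite ffunE Hj.
  case: ltnP => H /=; lia.
have Hle := Xs_le I0 lim P.
rewrite /Ws HS HX; case: ltnP => _ /=.
  rewrite addn1 subSS expnS; nia.
rewrite addn0 subSn // expnS; nia.
Qed.

Lemma step n (I0 S1 : {set 'I_n}) (E : pred (problem n)) (lim : {ffun 'I_n -> nat}) (i : 'I_n) :
  (forall P P', agree P P' -> E P' = E P) ->
  (forall P j (k : 'I_n), E P -> j \in I0 -> k <= da_final P j -> P.1 j k \notin S1) ->
  i \in I0 -> lim i < n - #|S1| ->
  (n - lim i) * #|[set P | Gs S1 (upd lim i (lim i).+1) P]| =
     (n - #|S1| - lim i) * #|[set P | Gs S1 lim P]| /\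
  Num I0 S1 E lim * #|[set P | Gs S1 (upd lim i (lim i).+1) P]| * n <=
     Num I0 S1 E (upd lim i (lim i).+1) * #|[set P | Gs S1 lim P]|.
Proof.
move=> HE1 HE2 Hi Hlt.
have Htn : lim i < n by apply: leq_trans Hlt (leq_subr _ _).
pose t : 'I_n := Ordinal Htn.
have Ht : lim i = t by [].
rewrite Ht.
set lim' := upd lim i t.+1.
have HG' : forall P, Gs S1 lim' P = Gs S1 lim P && (P.1 i t \notin S1).
  by move=> P; apply: Gs_upd.
have Hcnt : forall P, Gs S1 lim P ->
    #|[set k : 'I_n | (t <= k) && Gs S1 lim' (sw i t k P)]| = n - #|S1| - t.
  have Hlt' : t < n - #|S1| := Hlt.
  move=> P GP; rewrite -(count_good (s := P.1 i) (ltnW Hlt')); last first.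
    by move=> k Hk; move/GsP: GP; apply; rewrite Ht.
  apply: eq_card => k; rewrite !inE HG' sw_at.
  case Hk: (t <= k) => //=; by rewrite (sw_Gs Ht Hk GP).
have HK : #|[set k : 'I_n | t <= k]| = n - t.
  have := cardsC [set k : 'I_n | k < t]; rewrite card_lt ?(ltnW Htn) // card_ord.
  have -> : ~: [set k : 'I_n | k < t] = [set k : 'I_n | t <= k].
    by apply/setP => k; rewrite !inE -leqNgt.
  lia.
have Hinv : forall (k : 'I_n) P, t <= k -> sw i t k (sw i t k P) = P.
  by move=> k P _; exact: swK.
have HGs : forall (k : 'I_n) P, t <= k -> Gs S1 lim P -> Gs S1 lim (sw i t k P).
  by move=> k P Hk; exact: sw_Gs.
have Hsub : forall P, Gs S1 lim P && Gs S1 lim' P = Gs S1 lim' P.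
  by move=> P; rewrite HG'; case: (Gs _ _ _).
have P1 : (n - t) * #|[set P | Gs S1 lim' P]| = (n - #|S1| - t) * #|[set P | Gs S1 lim P]|.
  have := swap_sum (F := fun _ => 1) (Gs S1 lim') HGs Hinv (fun _ _ _ _ => erefl).
  have Hc' : #|[set P | Gs S1 lim P && Gs S1 lim' P]| = #|[set P | Gs S1 lim' P]|.
    by apply: eq_card => P; rewrite !inE Hsub.
  rewrite HK sum1dep_card Hc' => ->.
  rewrite (eq_bigr (fun _ => 1 * (n - #|S1| - t))); last by move=> P GP; rewrite Hcnt.
  by rewrite -big_distrl /= sum1dep_card mulnC.
split; first by [].
pose B P := t < num_apps P i.
pose F P := (E P && ~~ B P) * Ws I0 S1 lim P.
have Faux : forall (k : 'I_n) P, t <= k -> ~~ B P -> F (sw i t k P) = F P.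
  move=> k P Hk HB.
  have Hle : num_apps P i <= t by rewrite leqNgt.
  have Ha := sw_agree Hle Hk.
  by rewrite /F /B (HE1 _ _ Ha) (num_apps_eq Ha) (Ws_eq _ _ _ (num_apps_eq Ha)).
have HF : forall (k : 'I_n) P, t <= k -> Gs S1 lim P -> F (sw i t k P) = F P.
  move=> k P Hk _; case HB: (B P); last by rewrite Faux ?HB.
  case HB': (B (sw i t k P)); first by rewrite /F HB HB' !andbF.
  by have := Faux k (sw i t k P) Hk (negbT HB'); rewrite swK => ->.
have Hsw := swap_sum (F := F) (Gs S1 lim') HGs Hinv HF.
set SB := \sum_(P | Gs S1 lim P) (E P && B P) * Ws I0 S1 lim P.
set SC := \sum_(P | Gs S1 lim P) F P.
set SC' := \sum_(P | Gs S1 lim' P) F P.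
have ESC' : \sum_(P | Gs S1 lim P && Gs S1 lim' P) F P = SC'.
  by apply: eq_bigl => P; rewrite Hsub.
rewrite ESC' HK in Hsw.
rewrite [X in _ = X](eq_bigr (fun P => F P * (n - #|S1| - t))) in Hsw; last first.
  by move=> P GP; rewrite -(Hcnt P GP); congr (_ * _); apply: eq_card => k; rewrite !inE.
rewrite -big_distrl /= -/SC in Hsw.
apply: (arith_step (s := #|S1|) (t := t) (SB := SB) (SC := SC) (SC' := SC')) => //.
- rewrite /Num -big_split /=; apply: eq_bigr => P _; rewrite /F.
  by case: (E P); case: (B P); rewrite /= ?mul0n ?mul1n ?addn0.
- rewrite /Num.
  rewrite (eq_bigr (fun P => (n - #|S1|) * ((E P && B P) * Ws I0 S1 lim P) + n * F P)); last first.
    move=> P _; rewrite Ws_upd // /F; change (lim i < num_apps P i) with (B P).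
    by case: (E P); case: (B P); rewrite /= ?mul0n ?mul1n ?muln0 ?addn0 ?add0n // mulnC.
  rewrite big_split /= -!big_distrr /=; congr (_ * _ + _).
  rewrite [LHS]big_mkcond [RHS]big_mkcond; apply: eq_bigr => P _.
  rewrite HG'; case: (Gs S1 lim P) => //=.
  case EP: (E P); case BP: (B P) => //=; try by case: (_ \notin _); rewrite ?mul0n.
  rewrite HE2 //; rewrite leqNgt; apply/negP => /num_apps_small; rewrite leqNgt.
  by rewrite -/(B P) BP.
Qed.

Definition limstar n (I0 S1 : {set 'I_n}) : {ffun 'I_n -> nat} :=
  [ffun j => if j \in I0 then n - #|S1| else 0].

Lemma chain n (I0 S1 : {set 'I_n}) (E : pred (problem n)) :
  (forall P P', agree P P' -> E P' = E P) ->
  (forall P j (k : 'I_n), E P -> j \in I0 -> k <= da_final P j -> P.1 j k \notin S1) ->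
  forall d (lim : {ffun 'I_n -> nat}),
  \sum_(j in I0) (n - #|S1| - lim j) = d ->
  (forall j, j \in I0 -> lim j <= n - #|S1|) ->
  (forall j, j \notin I0 -> lim j = 0) ->
  0 < #|[set P | Gs S1 lim P]| ->
  0 < #|[set P | Gs S1 (limstar I0 S1) P]| /\
  Num I0 S1 E lim * #|[set P | Gs S1 (limstar I0 S1) P]| * expn n (Sg I0 (limstar I0 S1))
  <= Num I0 S1 E (limstar I0 S1) * #|[set P | Gs S1 lim P]| * expn n (Sg I0 lim).
Proof.
move=> HE1 HE2; elim=> [|d IH] lim HD Hle H0 Hpos.
  move: Hpos; have -> : lim = limstar I0 S1; last by move=> Hp; split => //; exact: leqnn.
  apply/ffunP => j; rewrite ffunE; case: ifP => Hj; last by rewrite H0 ?Hj.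
  move/eqP: HD; rewrite sum_nat_eq0 => /forallP/(_ j); rewrite Hj /= => /eqP.
  by move=> H; apply/eqP; rewrite eqn_leq Hle //= -subn_eq0 H.
case: (pickP [pred j | (j \in I0) && (lim j < n - #|S1|)]) => [i /andP [Hi Hlt]|none]; last first.
  move: HD; rewrite big1 // => j Hj; have := none j; rewrite /= Hj /= => /negbT.
  have := Hle j Hj; rewrite -leqNgt; lia.
have [P1 P2] := step HE1 HE2 Hi Hlt.
set lim' := upd lim i (lim i).+1.
have Hpos' : 0 < #|[set P | Gs S1 lim' P]|.
  move: P1; rewrite -/lim'; case: (#|[set P | Gs S1 lim' P]|) => //.
  rewrite muln0 => /esym /eqP; rewrite muln_eq0 => /orP [/eqP|]; first by lia.
  by move/eqP => Hz; rewrite Hz in Hpos.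
have HD' : \sum_(j in I0) (n - #|S1| - lim' j) = d.
  move: HD; rewrite (bigD1 i Hi) [in X in _ -> X](bigD1 i Hi) /lim' ffunE eqxx.
  rewrite [in X in _ -> X](eq_bigr (fun j => n - #|S1| - lim j)); last first.
    by move=> j /andP [_ /negbTE Hj]; rewrite ffunE Hj.
  by move=> /= Hs; apply/eqP; rewrite -eqSS -Hs subnS -addSn prednK // subn_gt0.
have Hle' : forall j, j \in I0 -> lim' j <= n - #|S1|.
  move=> j Hj; rewrite /lim' ffunE; case: eqP => [_|_]; [exact: Hlt | exact: Hle].
have H0' : forall j, j \notin I0 -> lim' j = 0.
  move=> j Hj; rewrite /lim' ffunE; case: eqP => [E'|_]; last exact: H0.
  by move: Hj; rewrite E' Hi.
have [Hgs IH0] := IH lim' HD' Hle' H0' Hpos'.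
split; first exact: Hgs.
move: IH0.
have HS : Sg I0 lim' = (Sg I0 lim).+1.
  rewrite /Sg (bigD1 i Hi) [in RHS](bigD1 i Hi) /= ffunE eqxx addSn; congr (_ + _).+1.
  by apply: eq_bigr => j /andP [_ /negbTE Hj]; rewrite ffunE Hj.
rewrite HS expnS => IH'.
set N := Num I0 S1 E lim; set N' := Num I0 S1 E lim'; set Ns := Num I0 S1 E (limstar I0 S1).
set g := #|[set P | Gs S1 lim P]|; set g' := #|[set P | Gs S1 lim' P]|.
set gs := #|[set P | Gs S1 (limstar I0 S1) P]|.
set es := expn n (Sg I0 (limstar I0 S1)); set e := expn n (Sg I0 lim).
have Hn : 0 < n by lia.
have Hg'n : 0 < g' * n by rewrite muln_gt0 Hpos'.
rewrite -(leq_pmul2r Hg'n).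
apply: (@leq_trans (N' * g * gs * es)).
  have -> : N * gs * es * (g' * n) = (N * g' * n) * (gs * es) by nia.
  have -> : N' * g * gs * es = (N' * g) * (gs * es) by nia.
  by rewrite leq_mul2r P2 orbT.
have -> : N' * g * gs * es = (N' * gs * es) * g by nia.
have -> : Ns * g * e * (g' * n) = (Ns * g' * (n * e)) * g by nia.
by rewrite leq_mul2r IH' orbT.
Qed.

Lemma INR_addn a b : INR (a + b) = (INR a + INR b)%R.
Proof. exact: plus_INR. Qed.
Lemma INR_muln a b : INR (a * b) = (INR a * INR b)%R.
Proof. exact: mult_INR. Qed.
Lemma INR_expn a b : INR (expn a b) = (INR a ^ b)%R.
Proof. elim: b => [|b IH]; first by rewrite expn0. by rewrite expnS INR_muln IH. Qed.
Lemma INR_leq a b : a <= b -> (INR a <= INR b)%R.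
Proof. by move/leP; exact: le_INR. Qed.

Lemma sum_INR_le (T : finType) (A : pred T) (f : T -> nat) (c : R) :
  (0 <= c)%R -> (forall P, A P -> INR (f P) <= c)%R ->
  (INR (\sum_(P | A P) f P) <= INR #|[set P | A P]| * c)%R.
Proof.
move=> Hc H; rewrite -sum1dep_card.
apply: (big_ind2 (fun x y : nat => (INR x <= INR y * c)%R)).
- rewrite /= Rmult_0_l; lra.
- move=> x1 x2 y1 y2 H1 H2; rewrite !INR_addn; lra.
- move=> P HP; rewrite /= Rmult_1_l; exact: H.
Qed.

Lemma num_apps_le n (P : problem n) (S1 : {set 'I_n}) j :
  [forall s in S1, ~~ applies P j s] -> num_apps P j <= n - #|S1|.
Proof.
move=> /forallP H; rewrite /num_apps.
have -> : n - #|S1| = #|~: S1| by rewrite [RHS]cardsCs setCK card_ord.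
apply: subset_leq_card; apply/subsetP => s; rewrite !inE => Ha.
apply/negP => Hs; have := H s; by rewrite Hs Ha.
Qed.

Lemma Rpower_decr a y1 y2 : (0 < a < 1)%R -> (y1 <= y2)%R -> (Rpower a y2 <= Rpower a y1)%R.
Proof.
move=> [Ha0 Ha1] Hy; rewrite /Rpower.
have Hl : (ln a < 0)%R by rewrite -ln_1; apply: ln_increasing.
have : (y2 * ln a <= y1 * ln a)%R by nra.
case/Rle_lt_or_eq_dec => [Hlt|->]; last exact: Rle_refl.
by apply: Rlt_le; apply: exp_increasing.
Qed.

Lemma Rleb_le x y : Rleb x y -> (x <= y)%R.
Proof. by rewrite /Rleb; case: Rle_dec. Qed.

Theorem lemma2 (n : nat) (eps L : R) (I0 S1 : {set 'I_n}) :
  (0 < eps < 1)%R -> (0 < L)%R ->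
  (eps * INR n <= INR #|I0|)%R -> (eps * INR n <= INR #|S1|)%R ->
  (prob (fun P : problem n =>
          Rleb (L * INR n) (INR (\sum_(i in I0) num_apps P i)) &&
          [forall i in I0, forall s in S1, ~~ applies P i s])
   <= Rpower (1 - eps) (L * INR n))%R.
Proof.
move=> Heps HL HI0 HS1.
pose E : pred (problem n) := fun P =>
  Rleb (L * INR n) (INR (\sum_(i in I0) num_apps P i)) &&
  [forall i in I0, forall s in S1, ~~ applies P i s].
change (prob E <= Rpower (1 - eps) (L * INR n))%R.
have HE1 : forall P P', agree P P' -> E P' = E P.
  move=> P P' Ha; rewrite /E; congr andb.
    by rewrite (eq_bigr (fun i => num_apps P i)) // => i _; exact: num_apps_eq.
  apply: eq_forallb => i; congr (_ ==> _); apply: eq_forallb => s.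
  by rewrite (applies_eq Ha).
have HE2 : forall P j (k : 'I_n), E P -> j \in I0 -> k <= da_final P j -> P.1 j k \notin S1.
  move=> P j k /andP [_ /forallP /(_ j) /implyP H] Hj Hk.
  move: (H Hj) => /forallP /(_ (P.1 j k)) /implyP H'.
  apply/negP => Hs.
  have Ha : applies P j (P.1 j k) by apply/existsP; exists k; rewrite Hk eqxx.
  by move: (H' Hs); rewrite Ha.
pose lim0 : {ffun 'I_n -> nat} := [ffun => 0].
have HG0 : forall P, Gs S1 lim0 P by move=> P; apply/GsP => j k; rewrite ffunE.
have Hpos0 : 0 < #|[set P | Gs S1 lim0 P]|.
  apply/card_gt0P; exists ([ffun => 1%g], [ffun => 1%g]); by rewrite inE HG0.
have Hle0 : forall j, j \in I0 -> lim0 j <= n - #|S1| by move=> j _; rewrite ffunE.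
have H00 : forall j, j \notin I0 -> lim0 j = 0 by move=> j _; rewrite ffunE.
have [Hgs Hch] := chain (lim := lim0) HE1 HE2 (erefl _) Hle0 H00 Hpos0.
have HX0 : forall P, Xs I0 lim0 P = 0.
  by move=> P; apply: big1 => j _; rewrite ffunE minn0.
have HS0 : Sg I0 lim0 = 0 by apply: big1 => j _; rewrite ffunE.
have HN0 : Num I0 S1 E lim0 = #|[set P | E P]|.
  rewrite /Num -sum1dep_card [RHS]big_mkcond.
  apply: eq_big => [P|P _]; first by rewrite HG0.
  by rewrite /Ws HX0 HS0 expn0 muln1; case: (E P).
have Ho : #|[set P | Gs S1 lim0 P]| = #|{: problem n}|.
  by apply: eq_card => P; rewrite !inE HG0.
rewrite HN0 HS0 expn0 muln1 Ho in Hch.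
set gs := #|[set P | Gs S1 (limstar I0 S1) P]| in Hgs Hch.
set es := expn n (Sg I0 (limstar I0 S1)) in Hch.
set Ns := Num I0 S1 E (limstar I0 S1) in Hch.
set R0 := Rpower (1 - eps) (L * INR n).
have HR0 : (0 <= R0)%R by apply: Rlt_le; apply: exp_pos.
have Hsn : #|S1| <= n by rewrite -[X in _ <= X]card_ord max_card.
have Hc : (INR (n - #|S1|) <= (1 - eps) * INR n)%R.
  rewrite (minus_INR _ _ (elimT leP Hsn)); lra.
have HW : forall P, E P -> (INR (Ws I0 S1 (limstar I0 S1) P) <= INR es * R0)%R.
  move=> P EP.
  have HX : Xs I0 (limstar I0 S1) P = \sum_(i in I0) num_apps P i.
    apply: eq_bigr => j Hj; rewrite ffunE Hj; apply/minn_idPl.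
    move: EP => /andP [_ /forallP /(_ j)]; rewrite Hj /=; exact: num_apps_le.
  have Hle := Xs_le I0 (limstar I0 S1) P.
  move: EP => /andP [/Rleb_le HLn _].
  rewrite /Ws /es.
  set X := Xs I0 (limstar I0 S1) P; set S := Sg I0 (limstar I0 S1).
  rewrite INR_muln !INR_expn.
  have HSX : (INR n ^ S = INR n ^ X * INR n ^ (S - X))%R.
    by rewrite -pow_add; f_equal; rewrite /X /S; lia.
  rewrite HSX; set Y := S - X.
  have H1 : (INR (n - #|S1|) ^ X <= (1 - eps) ^ X * INR n ^ X)%R.
    rewrite -Rpow_mult_distr; apply: pow_incr; split; [exact: pos_INR | exact: Hc].
  have H2 : ((1 - eps) ^ X <= R0)%R.
    rewrite -Rpower_pow; last lra.
    apply: Rpower_decr; first lra.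
    by rewrite /X HX.
  have H3 : (0 <= INR n ^ Y)%R by apply: pow_le; exact: pos_INR.
  have H4 : (0 <= INR n ^ X)%R by apply: pow_le; exact: pos_INR.
  have H5 : (0 <= (1 - eps) ^ X)%R by apply: pow_le; lra.
  apply: (Rle_trans _ ((1 - eps) ^ X * INR n ^ X * INR n ^ Y)).
    by apply: Rmult_le_compat_r.
  have : ((1 - eps) ^ X * (INR n ^ X * INR n ^ Y) <= R0 * (INR n ^ X * INR n ^ Y))%R.
    apply: Rmult_le_compat_r => //; exact: Rmult_le_pos.
  lra.
have HNs : (INR Ns <= INR gs * (INR es * R0))%R.
  apply: sum_INR_le; first by apply: Rmult_le_pos => //; exact: pos_INR.
  move=> P _; case EP: (E P); first by rewrite mul1n; exact: HW.
  rewrite mul0n /=; apply: Rmult_le_pos => //; exact: pos_INR.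
have Hes : 0 < es.
  rewrite /es expn_gt0; case: (posnP n) => [Hn0|_] //.
  apply/orP; right; apply/eqP; apply: big1 => j Hj; rewrite ffunE Hj; lia.
have Hch' := INR_leq Hch; rewrite !INR_muln in Hch'.
have Hgs' : (0 < INR gs)%R by apply: lt_0_INR; apply/ltP.
have Hes' : (0 < INR es)%R by apply: lt_0_INR; apply/ltP.
have Hcard : #|E| = #|[set P | E P]| by rewrite cardsE.
have Ho' : (0 < INR #|{: problem n}|)%R.
  by apply: lt_0_INR; apply/ltP; rewrite -Ho.
rewrite /prob Hcard.
set e := INR #|[set P | E P]| in Hch' *; set o := INR #|{: problem n}| in Hch' Ho' *.
have Hmain : (e * (INR gs * INR es) <= (R0 * o) * (INR gs * INR es))%R.
  have : (INR Ns * o <= INR gs * (INR es * R0) * o)%R.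
    apply: Rmult_le_compat_r; [lra | exact: HNs].
  nra.
have He : (e <= R0 * o)%R.
  apply: (Rmult_le_reg_r (INR gs * INR es)); first exact: Rmult_lt_0_compat.
  exact: Hmain.
apply: (Rmult_le_reg_r o) => //.
rewrite /Rdiv Rmult_assoc Rinv_l; last lra.
lra.
Qed.
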